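(* Let $X$ be a topological space, $b\in X$, and $\mathcal{U}$ an open covering of $X$ such that $b\in U$ for every $U\in\mathcal{U}$, every $U\in\mathcal{U}$ is path-connected, $U\cap V$ is path-connected for all $U,V\in\mathcal{U}$, and $U\cap V\cap W$ is path-connected for all $U,V,W\in\mathcal{U}$. Let $G$ be a group. Given a family $\{h_U\in H^1(U,b)\}_{U\in\mathcal{U}}$, there exists $h\in H^1(X,b)$ with $r_U(h)=h_U$ for every $U\in\mathcal{U}$ if and only if $r_{U\cap V}(h_U)=r_{U\cap V}(h_V)$ for every pair $U,V\in\mathcal{U}$. If such a class $h$ exists, it is unique.
   Context: Conventions: a path in a space $W$ is a continuous map $[0,1]\to W$; $P(W)$ is the set of paths; $p\cdot q$ is concatenation when $p(1)=q(0)$; homotopies of paths are relative to $\{0,1\}$, $p\sim q$ means homotopic. $G$ has unit $1$. For $b\in W$: a $0$-cochain of $(W,b)$ is a map $c\colon W\to G$ with $c(b)=1$; these form a group $C^0(W,b)$ under pointwise multiplication. A $1$-cochain is a map $u\colon P(W)\to G$ with $u(p)=1$ for the constant path at $b$; it is a cocycle if $u(p)=u(q)$ when $p\sim q$ and $u(p\cdot q)=u(p)u(q)$ when defined. $C^0(W,b)$ acts on cocycles by $(c\bullet u)(p)=c(p(0))u(p)c(p(1))^{-1}$; $H^1(W,b)$ is the set of orbits. For $A\subset W$ with $b\in A$, $r_A\colon H^1(W,b)\to H^1(A,b)$ is induced by restricting cocycles to paths in $A$. *)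

(* Defs.v *)
From HB Require Import structures.
From mathcomp Require Import all_boot all_order all_algebra.
From mathcomp Require Import all_classical all_reals.
From mathcomp Require Import topology normedtype Rstruct Rstruct_topology.
From mathcomp Require Import monoid.
Local Notation R := Rdefinitions.R.

Set Implicit Arguments.
Unset Strict Implicit.
Unset Printing Implicit Defensive.

Import Order.TTheory GRing.Theory Num.Theory.
Local Open Scope classical_set_scope.
Local Open Scope ring_scope.

Section TopH1.
Variables (X : topologicalType) (G : groupType).

(* A path is represented by a map R -> X; only its values on [0,1] matter. *)
Definition zeroR : R := 0.
Definition oneR : R := 1.
Definition I01 : set R := `[0, 1].

Definition is_path (W : set X) (p : R -> X) : Prop :=
  {within I01, continuous p} /\ (forall s, I01 s -> W (p s)).

Definition pconcat (p q : R -> X) : R -> X :=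
  fun s => if (s <= 1 / 2) then p (2 * s) else q (2 * s - 1).

Definition path_homotopic (W : set X) (p q : R -> X) : Prop :=
  exists H : R * R -> X,
    [/\ {within I01 `*` I01, continuous H},
        (forall s t, I01 s -> I01 t -> W (H (s, t))),
        (forall s, I01 s -> H (s, 0) = p s /\ H (s, 1) = q s) &
        (forall t, I01 t -> H (0, t) = p 0 /\ H (1, t) = p 1)].

Definition path_connected (A : set X) : Prop :=
  A !=set0 /\ forall x y, A x -> A y ->
    exists p, is_path A p /\ p 0 = x /\ p 1 = y.

(* 0-cochains of (W,b): maps c : X -> G with c b = 1 (values off W are
   irrelevant). *)
Definition cochain0 (b : X) (c : X -> G) : Prop := c b = 1%g.

(* 1-cochains are maps u : (R -> X) -> G; only values on paths in W matter. *)
Definition cochain1 (W : set X) (b : X) (u : (R -> X) -> G) : Prop :=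
  forall p, is_path W p -> (forall s, I01 s -> p s = b) -> u p = 1%g.

Definition cocycle (W : set X) (b : X) (u : (R -> X) -> G) : Prop :=
  [/\ cochain1 W b u,
      (forall p q, is_path W p -> is_path W q -> path_homotopic W p q ->
          u p = u q) &
      (forall p q, is_path W p -> is_path W q -> p 1 = q 0 ->
          u (pconcat p q) = (u p * u q)%g)].

Definition cohomologous (W : set X) (b : X) (u v : (R -> X) -> G) : Prop :=
  exists c, cochain0 b c /\
    forall p, is_path W p -> v p = (c (p zeroR) * u p * (c (p oneR))^-1)%g.

Definition H1class (W : set X) (b : X) (u : (R -> X) -> G) :
    set ((R -> X) -> G) :=
  [set v | cocycle W b v /\ cohomologous W b u v].

Definition H1 (W : set X) (b : X) : set (set ((R -> X) -> G)) :=
  [set O | exists u, cocycle W b u /\ O = H1class W b u].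

Definition restr (A : set X) (b : X) (O : set ((R -> X) -> G)) :
    set ((R -> X) -> G) :=
  [set v | cocycle A b v /\ exists u, O u /\ cohomologous A b u v].

End TopH1.

(* Main.v *)
Require Import Defs.
From HB Require Import structures.
From mathcomp Require Import all_boot all_order all_algebra.
From mathcomp Require Import all_classical all_reals.
From mathcomp Require Import topology normedtype Rstruct Rstruct_topology.
From mathcomp Require Import monoid.
From mathcomp Require Import ring lra zify.
From Stdlib Require Import ClassicalEpsilon.
Set Implicit Arguments. Unset Strict Implicit. Unset Printing Implicit Defensive.
Import Order.TTheory GRing.Theory Num.Theory.
Local Open Scope classical_set_scope.
Local Open Scope ring_scope.
Local Notation R := Rdefinitions.R.

Lemma within_comp (T U V : topologicalType) (A : set T) (B : set U) (f : T -> U) (g : U -> V) :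
  {within A, continuous f} -> {within B, continuous g} -> (forall x, A x -> B (f x)) ->
  {within A, continuous (g \o f)}.
Proof.
move=> /subspace_continuousP cf /subspace_continuousP cg AB.
apply/subspace_continuousP => x Ax.
apply: cvg_trans; last exact: (cg _ (AB _ Ax)).
move=> P /=; rewrite /within /= => hP.
have := cf x Ax _ hP.
rewrite /from_subspace /=.
rewrite !nbhs_simpl /=. move=> H. rewrite /within /= in H *. apply: filterS H => y /= H Ay. exact: H Ay (AB _ Ay).
Qed.

Lemma c_comp (T U V : topologicalType) (f : T -> U) (g : U -> V) :
  continuous f -> continuous g -> continuous (g \o f).
Proof. by move=> cf cg x; apply: continuous_comp; [exact: cf | exact: cg]. Qed.
Lemma c_fst : continuous (fun z : R * R => z.1).
Proof. by move=> z; apply: cvg_fst. Qed.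
Lemma c_snd : continuous (fun z : R * R => z.2).
Proof. by move=> z; apply: cvg_snd. Qed.
Lemma c_pair (T : topologicalType) (U V : topologicalType) (f : T -> U) (g : T -> V) :
  continuous f -> continuous g -> continuous (fun z => (f z, g z)).
Proof. by move=> cf cg z; apply: cvg_pair; [exact: cf | exact: cg]. Qed.
Lemma c_add (T : topologicalType) (f g : T -> R) :
  continuous f -> continuous g -> continuous (fun z => f z + g z).
Proof. move=> cf cg z.
have hf : f x @[x --> z] --> f z := cf z.
have hg : g x @[x --> z] --> g z := cg z.
exact: (@cvgD R R^o _ _ _ f g _ _ hf hg). Qed.
Lemma c_mul (T : topologicalType) (f g : T -> R) :
  continuous f -> continuous g -> continuous (fun z => f z * g z).
Proof. move=> cf cg z. exact: (@cvgM R _ _ _ f g _ _ (cf z) (cg z)). Qed.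
Lemma c_min (T : topologicalType) (f g : T -> R) :
  continuous f -> continuous g -> continuous (fun z => Num.min (f z) (g z)).
Proof. by move=> cf cg z; apply: (@continuous_min _ _ f g); [exact: cf|exact: cg]. Qed.
Lemma c_max (T : topologicalType) (f g : T -> R) :
  continuous f -> continuous g -> continuous (fun z => Num.max (f z) (g z)).
Proof. by move=> cf cg z; apply: (@continuous_max _ _ f g); [exact: cf|exact: cg]. Qed.
Lemma c_cst (T U : topologicalType) (c : U) : continuous (fun _ : T => c).
Proof. by move=> z; apply: cvg_cst. Qed.
Lemma c_id : continuous (fun z : R => z).
Proof. by move=> z; apply: cvg_id. Qed.

Lemma I01E (s : R) : I01 s = (0 <= s <= 1).
Proof. by rewrite /I01 /= in_itv. Qed.
Lemma I01_0 : I01 0. Proof. by rewrite I01E lexx ler01. Qed.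
Lemma I01_1 : I01 1. Proof. by rewrite I01E lexx ler01. Qed.

Definition mn (s : R) := Num.min (2 * s) 1.
Definition mx (s : R) := Num.max (2 * s - 1) 0.
Lemma mm_le (s : R) : s <= 1/2 -> mn s = 2 * s /\ mx s = 0.
Proof.
move=> h; rewrite /mn /mx; split; [apply: min_l | apply: max_r]; lra.
Qed.
Lemma mm_gt (s : R) : ~ (s <= 1/2) -> mn s = 1 /\ mx s = 2 * s - 1.
Proof.
move=> h. have h' : 1/2 < s by rewrite ltNge; apply/negP.
rewrite /mn /mx; split; [apply: min_r | apply: max_l]; lra.
Qed.
Lemma mm_bnd (s : R) : 0 <= s <= 1 -> [/\ 0 <= mn s, mn s <= 1, 0 <= mx s & mx s <= 1].
Proof.
move=> /andP[h1 h2]; case: (boolP (s <= 1/2)) => h.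
  by have [-> ->] := mm_le h; split; lra.
by have [-> ->] := mm_gt (negP h); split; lra.
Qed.
Lemma c_mn : continuous mn.
Proof. apply: c_min; [apply: c_mul; [exact: c_cst|exact: c_id]|exact: c_cst]. Qed.
Lemma c_mx : continuous mx.
Proof. apply: c_max; [apply: c_add; [apply: c_mul; [exact: c_cst|exact: c_id]|exact: c_cst]|exact: c_cst]. Qed.
Lemma c_opp (T : topologicalType) (f : T -> R) : continuous f -> continuous (fun z => - f z).
Proof. move=> cf z.
have hf : f x @[x --> z] --> f z := cf z.
exact: (@cvgN R R^o _ _ _ f _ hf). Qed.

Section PathsB.
Variable X : topologicalType.
Implicit Types (W : set X) (p q : R -> X).

Lemma is_path_eq W p q : is_path W p -> (forall s, I01 s -> p s = q s) -> is_path W q.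
Proof.
case=> cp Wp eq; split.
- apply: subspace_eq_continuous cp => s; rewrite in_setE => /eq.
  by rewrite /from_subspace.
- by move=> s Is; rewrite -eq //; apply: Wp.
Qed.

Lemma is_path_sub W W' p : W `<=` W' -> is_path W p -> is_path W' p.
Proof. by move=> sW [cp Wp]; split => // s /Wp /sW. Qed.

Lemma is_path_comp (Y : topologicalType) (K : set Y) W (F : Y -> X) (g : R -> Y) p :
  {within K, continuous F} -> continuous g -> (forall s, I01 s -> K (g s)) ->
  (forall s, I01 s -> W (F (g s))) -> (forall s, I01 s -> p s = F (g s)) -> is_path W p.
Proof.
move=> cF cg Kg WF eq; apply: (@is_path_eq _ (F \o g)); last by move=> s /eq ->.
split => //; apply: within_comp cF Kg; exact: continuous_subspaceT.
Qed.

Lemma homot_gen (Y : topologicalType) (K : set Y) W (F : Y -> X) (Gm : R * R -> Y) p q :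
  {within K, continuous F} -> (forall y, K y -> W (F y)) -> continuous Gm ->
  (forall s t, I01 s -> I01 t -> K (Gm (s, t))) ->
  (forall t, I01 t -> Gm (0, t) = Gm (0, 0) /\ Gm (1, t) = Gm (1, 0)) ->
  (forall s, I01 s -> p s = F (Gm (s, 0))) -> (forall s, I01 s -> q s = F (Gm (s, 1))) ->
  [/\ is_path W p, is_path W q & path_homotopic W p q].
Proof.
move=> cF WF cG KG Gend ep eq.
have cGc : forall c, continuous (fun s => Gm (s, c)).
  move=> c; apply: (@c_comp _ _ _ (fun s => (s, c)) Gm) => //.
  by apply: c_pair; [exact: c_id | exact: c_cst].
split.
- apply: (@is_path_comp _ K W F (fun s => Gm (s, 0))) => // s Is.
    by apply: KG => //; exact: I01_0.
  by apply: WF; apply: KG => //; exact: I01_0.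
- apply: (@is_path_comp _ K W F (fun s => Gm (s, 1))) => // s Is.
    by apply: KG => //; exact: I01_1.
  by apply: WF; apply: KG => //; exact: I01_1.
exists (F \o Gm); split.
- apply: within_comp cF _; first exact: continuous_subspaceT.
  by case=> s t [/= Is It]; apply: KG.
- by move=> s t Is It; apply: WF; apply: KG.
- by move=> s Is; rewrite /= -ep // -eq.
- move=> t It; rewrite /=; have [-> ->] := Gend t It.
  by rewrite /= -!ep //; [exact: I01_1 | exact: I01_0].
Qed.

Definition seg p (a b : R) : R -> X := fun s => p (a + s * (b - a)).

Lemma is_path_seg W p a b : is_path W p -> 0 <= a -> a <= b -> b <= 1 -> is_path W (seg p a b).
Proof.
move=> [cp Wp] a0 ab b1.
have Kg : forall s, I01 s -> I01 (a + s * (b - a)).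
  move=> s; rewrite !I01E => /andP[s0 s1]; apply/andP; split; nra.
apply: (@is_path_comp _ I01 W p (fun s => a + s * (b - a))) => //.
- apply: c_add; first exact: c_cst.
  by apply: c_mul; [exact: c_id | exact: c_cst].
- by move=> s /Kg /Wp.
Qed.

Lemma is_path_seg' W p a b : {within I01, continuous p} -> 0 <= a -> a <= b -> b <= 1 ->
  (forall s, I01 s -> W (seg p a b s)) -> is_path W (seg p a b).
Proof.
move=> cp a0 ab b1 Wp.
have Kg : forall s, I01 s -> I01 (a + s * (b - a)).
  move=> s; rewrite !I01E => /andP[s0 s1]; apply/andP; split; nra.
apply: (@is_path_comp _ I01 W p (fun s => a + s * (b - a))) => //.
apply: c_add; first exact: c_cst.
by apply: c_mul; [exact: c_id | exact: c_cst].
Qed.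
End PathsB.

Definition fr (i N : nat) : R := i%:R / N%:R.
Lemma fr_ge0 i N : 0 <= fr i N.
Proof. by rewrite /fr divr_ge0 // ler0n. Qed.
Lemma fr_le i j N : (0 < N)%N -> (i <= j)%N -> fr i N <= fr j N.
Proof.
move=> N0 ij; rewrite /fr ler_pM2r ?ler_nat // invr_gt0 ltr0n //.
Qed.
Lemma fr_le1 j N : (0 < N)%N -> (j <= N)%N -> fr j N <= 1.
Proof.
move=> N0 jN; rewrite /fr ler_pdivrMr ?ltr0n // mul1r ler_nat //.
Qed.
Lemma fr_NN N : (0 < N)%N -> fr N N = 1.
Proof. by move=> N0; rewrite /fr divff // pnatr_eq0 -lt0n. Qed.
Lemma fr_0 N : fr 0 N = 0.
Proof. by rewrite /fr mul0r. Qed.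
Lemma fr_I01 j N : (0 < N)%N -> (j <= N)%N -> I01 (fr j N).
Proof. by move=> N0 jN; rewrite I01E fr_ge0 fr_le1. Qed.

Section Prod.
Variable G : groupType.
Local Open Scope group_scope.
Fixpoint prodG (f : nat -> G) (n : nat) : G :=
  match n with 0%N => 1 | n.+1 => prodG f n * f n end.

Lemma prodG_eq (f g : nat -> G) n : (forall i, (i < n)%N -> f i = g i) -> prodG f n = prodG g n.
Proof.
elim: n => //= n IH h; rewrite IH ?h // => i lt; apply: h; exact: ltnW.
Qed.

Lemma prodG_add (f : nat -> G) m n : prodG f (m + n) = prodG f m * prodG (fun i => f (m + i)%N) n.
Proof.
elim: n => /= [|n IH]; first by rewrite addn0 mulg1.
by rewrite addnS /= IH mulgA.
Qed.

Lemma prodG_mul (f : nat -> G) N K :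
  prodG f (N * K) = prodG (fun i => prodG (fun k => f (i * K + k)%N) K) N.
Proof.
elim: N => [|N IH]; first by [].
by rewrite mulSn addnC prodG_add IH.
Qed.

Lemma prodG_tele (f g c : nat -> G) n :
  (forall i, (i < n)%N -> g i = c i * f i * (c i.+1)^-1) ->
  prodG g n = c 0%N * prodG f n * (c n)^-1.
Proof.
elim: n => /= [|n IH] h; first by rewrite mulg1 mulgV.
rewrite IH; last by move=> i lt; apply: h; exact: ltnW.
rewrite h // !mulgA; congr (_ * _ * _); rewrite -!mulgA; congr (_ * _).
by rewrite mulVg mulg1.
Qed.
End Prod.

Section Precoc.
Variables (X : topologicalType) (G : groupType).
Implicit Types (W : set X) (p q : R -> X) (u : (R -> X) -> G).

Definition precoc W u :=
  (forall p q, is_path W p -> is_path W q -> path_homotopic W p q -> u p = u q) /\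
  (forall p q, is_path W p -> is_path W q -> is_path W (pconcat p q) -> p 1 = q 0 ->
     u (pconcat p q) = (u p * u q)%g).

Lemma cocycle_precoc W b u : cocycle W b u -> precoc W u.
Proof. by case=> _ h1 h2; split => // p q pp pq _; apply: h2. Qed.

Lemma precoc_sub W W' u : W `<=` W' -> precoc W' u -> precoc W u.
Proof.
move=> sW [h1 h2]; split.
- move=> p q pp pq [H [cH WH H0 H1]]; apply: h1; [exact: is_path_sub sW pp|exact: is_path_sub sW pq|].
  by exists H; split => // s t Is It; apply: sW; apply: WH.
- move=> p q pp pq ppq e; by apply: h2 => //; apply: is_path_sub sW _.
Qed.

Lemma u_eq W u p q : precoc W u -> is_path W p -> (forall s, I01 s -> p s = q s) ->
  u p = u q /\ is_path W q.
Proof.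
move=> [hom _] pp eq.
have [_ pq h] := @homot_gen X R I01 W p (fun z => z.1) p q pp.1 pp.2 c_fst
  (fun s t Is _ => Is) (fun t _ => conj erefl erefl) (fun s _ => erefl) (fun s Is => esym (eq s Is)).
by split => //; apply: hom.
Qed.

Lemma u_const W u p x : precoc W u -> is_path W p -> (forall s, I01 s -> p s = x) -> u p = 1%g.
Proof.
move=> pc pp cx.
have e : forall s, I01 s -> p s = pconcat p p s.
  move=> s Is; have := Is; rewrite I01E => /andP[s0 s1].
  rewrite (cx s Is) /pconcat; case: ifP => h.
    by rewrite cx // I01E; apply/andP; split; lra.
  move/negbT: h; rewrite -ltNge => h.
  by rewrite cx // I01E; apply/andP; split; lra.
have [e1 ppp] := u_eq pc pp e.
have h := pc.2 p p pp pp ppp (etrans (cx 1 I01_1) (esym (cx 0 I01_0))).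
rewrite -e1 in h; apply: (@mulIg _ (u p)); by rewrite mul1g -h.
Qed.

Lemma u_split W u q (al mu be : R) : precoc W u -> is_path W q ->
  0 <= al -> al <= mu -> mu <= be -> be <= 1 ->
  u (seg q al be) = (u (seg q al mu) * u (seg q mu be))%g.
Proof.
move=> pc qp a0 am mb b1.
pose g1 s := al + mn s * (mu - al) + mx s * (be - mu).
pose g2 s := al + s * (be - al).
pose Gm (z : R * R) := (1 - z.2) * g1 z.1 + z.2 * g2 z.1.
have cG : continuous Gm.
  apply: c_add; apply: c_mul.
  - by apply: c_add; [exact: c_cst | apply: c_opp; exact: c_snd].
  - apply: (@c_comp _ _ _ (fun z : R * R => z.1) g1); first exact: c_fst.
    apply: c_add; first apply: c_add; first exact: c_cst.
      by apply: c_mul; [exact: c_mn | exact: c_cst].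
    by apply: c_mul; [exact: c_mx | exact: c_cst].
  - exact: c_snd.
  - apply: (@c_comp _ _ _ (fun z : R * R => z.1) g2); first exact: c_fst.
    apply: c_add; first exact: c_cst.
    by apply: c_mul; [exact: c_id | exact: c_cst].
have KG : forall s t, I01 s -> I01 t -> I01 (Gm (s, t)).
  move=> s t; rewrite !I01E => /andP[s0 s1] /andP[t0 t1].
  have [n0 n1 x0 x1] := mm_bnd (s := s) (introT andP (conj s0 s1)).
  have h1 : 0 <= g1 s <= 1 by rewrite /g1; apply/andP; split; nra.
  have h2 : 0 <= g2 s <= 1 by rewrite /g2; apply/andP; split; nra.
  move: h1 h2 => /andP[h11 h12] /andP[h21 h22].
  rewrite /Gm /=; apply/andP; split; nra.
have Gend : forall t, I01 t -> Gm (0, t) = Gm (0, 0) /\ Gm (1, t) = Gm (1, 0).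
  move=> t _; rewrite /Gm /g1 /g2 /=.
  have [-> ->] : mn 0 = 2 * 0 /\ mx 0 = 0 by apply: mm_le; lra.
  have [-> ->] : mn 1 = 1 /\ mx 1 = 2 * 1 - 1 by apply: mm_gt; apply/negP; rewrite -ltNge; lra.
  split; ring.
have ep : forall s, I01 s -> pconcat (seg q al mu) (seg q mu be) s = q (Gm (s, 0)).
  move=> s _; rewrite /pconcat /seg /Gm /g1 /=; case: ifP => h.
    by have [-> ->] := mm_le h; congr q; ring.
  have [-> ->] := mm_gt (negP (negbT h)); congr q; ring.
have eq : forall s, I01 s -> seg q al be s = q (Gm (s, 1)).
  by move=> s _; rewrite /seg /Gm /g2 /=; congr q; ring.
have [p1 p2 hom'] := @homot_gen X R I01 W q Gm _ _ qp.1 qp.2 cG KG Gend ep eq.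
rewrite -(pc.1 _ _ p1 p2 hom').
apply: pc.2.
- apply: is_path_seg => //; lra.
- apply: is_path_seg => //; lra.
- by [].
- by rewrite /seg; congr q; ring.
Qed.

Lemma u_msplit W u q K : precoc W u -> is_path W q -> (0 < K)%N ->
  u q = prodG (fun k => u (seg q (fr k K) (fr k.+1 K))) K.
Proof.
move=> pc qp K0.
have step : forall j, (j <= K)%N ->
    u (seg q 0 (fr j K)) = prodG (fun k => u (seg q (fr k K) (fr k.+1 K))) j.
  elim=> [|j IH] jK /=.
    apply: (@u_const W u _ (q 0)) pc _ _.
      by apply: is_path_seg => //; rewrite ?fr_0 ?fr_ge0 ?fr_le1.
    by move=> s _; rewrite /seg fr_0; congr q; ring.
  rewrite -IH ?(ltnW jK) //; apply: (u_split pc qp).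
  - exact: lexx.
  - exact: fr_ge0.
  - exact: fr_le.
  - exact: fr_le1.
have := step K (leqnn K); rewrite fr_NN // => <-.
have e : forall s, I01 s -> q s = seg q 0 1 s by move=> s _; rewrite /seg; congr q; ring.
by have [-> _] := u_eq pc qp e.
Qed.
End Precoc.

Lemma lebesgue (Y : pseudoMetricType R) (X : topologicalType) (K : set Y) (f : Y -> X)
    (cU : set (set X)) :
  compact K -> {within K, continuous f} -> (forall U, cU U -> open U) ->
  (forall x, exists U, cU U /\ U x) ->
  exists2 d : R, 0 < d &
    forall z, K z -> exists U, cU U /\ forall w, K w -> ball z d w -> U (f w).
Proof.
move=> cK cf oU cov.
have loc : forall z, K z -> exists U, cU U /\
    exists2 r : R, 0 < r & forall w, K w -> ball z r w -> U (f w).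
  move=> z Kz; have [U [cUU Ufz]] := cov (f z); exists U; split => //.
  have hf := (subspace_continuousP _ _).1 cf z Kz.
  have nU : nbhs (f z) U := open_nbhs_nbhs (conj (oU _ cUU) Ufz).
  have := hf _ nU; rewrite /= /within nbhs_simpl.
  move=> /nbhs_ballP [r r0 hr]; exists r => // w Kw bw; exact: hr w bw Kw.
case: (pselect (exists2 d : R, 0 < d &
    forall z, K z -> exists U, cU U /\ forall w, K w -> ball z d w -> U (f w))) => // nex.
have bad : forall n : nat, exists z, K z /\
    forall U, cU U -> ~ (forall w, K w -> ball z (n.+1%:R^-1) w -> U (f w)).
  move=> n; case: (pselect (exists z, K z /\
    forall U, cU U -> ~ (forall w, K w -> ball z (n.+1%:R^-1) w -> U (f w)))) => // h.
  exfalso; apply: nex; exists (n.+1%:R^-1); first by rewrite invr_gt0 ltr0n.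
  move=> z Kz; case: (pselect (exists U, cU U /\
    forall w, K w -> ball z (n.+1%:R^-1) w -> U (f w))) => // hU.
  exfalso; apply: h; exists z; split => // U cUU hU'; apply: hU; exists U; by split.
have [z hz] := boolp.choice bad. exfalso.
have FK : (z @ \oo) K by apply: filterS (nbhs_infty_ge 0) => n _; exact: (hz n).1.
have [c [Kc clc]] := cK (z @ \oo) _ FK.
have [U [cUU [r r0 hr]]] := loc c Kc.
have [n0 hn0] : exists n0 : nat, 2 / r < n0%:R.
  exists (Num.Def.archi_bound (2 / r)); apply: archi_boundP.
  by rewrite divr_ge0 // ltW.
have FA : (z @ \oo) [set z m | m in [set m | (n0 <= m)%N]].
  by apply: filterS (nbhs_infty_ge n0) => m hm /=; exists m.
have [y [[m hm <-] bcy]] := clc _ _ FA (nbhsx_ballx c (r / 2) (divr_gt0 r0 (ltr0n _ 2))).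
apply: ((hz m).2 U cUU) => w Kw bw. apply: (hr w Kw).
apply: (le_ball _ (ball_triangle bcy bw)).
have hm' : n0%:R <= m.+1%:R :> R by rewrite ler_nat; exact: leqW.
have h2 : 2 < n0%:R * r by rewrite -ltr_pdivrMr.
have h3 : 0 < m.+1%:R :> R by rewrite ltr0n.
have h4 : m.+1%:R^-1 * m.+1%:R = 1 :> R by rewrite mulVf // gt_eqF.
have h5 : 0 < m.+1%:R^-1 :> R by rewrite invr_gt0.
have h6 : 2 < m.+1%:R * r by nra.
have h7 : m.+1%:R^-1 * (m.+1%:R * r) = r by rewrite mulrA h4 mul1r.
have h8 : m.+1%:R^-1 * 2 < m.+1%:R^-1 * (m.+1%:R * r) by rewrite ltr_pM2l.
have h9 : m.+1%:R^-1 <= r / 2.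
  by rewrite h7 in h8; rewrite ler_pdivlMr //; exact: ltW.
by rewrite [X in _ <= X](splitr r) lerD2l.
Qed.

Definition lin (i N : nat) (s : R) : R := fr i N + s * (fr i.+1 N - fr i N).

Lemma lin_diff i N : (0 < N)%N -> fr i.+1 N - fr i N = N%:R^-1.
Proof.
move=> N0; rewrite /fr -mulrBl -natrB // subSnn mul1r //.
Qed.

Lemma lin_I01 i N s : (i < N)%N -> I01 s -> I01 (lin i N s).
Proof.
move=> iN; rewrite !I01E => /andP[s0 s1].
have N0 : (0 < N)%N by apply: leq_ltn_trans iN.
have h1 := fr_ge0 i N. have h2 := fr_le1 N0 iN.
have h3 := fr_le N0 (leqnSn i).
rewrite /lin; apply/andP; split; nra.
Qed.

Lemma lin0 i N : lin i N 0 = fr i N. Proof. by rewrite /lin mul0r addr0. Qed.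
Lemma lin1 i N : lin i N 1 = fr i.+1 N. Proof. by rewrite /lin mul1r addrC subrK. Qed.

Lemma grid_ball (d : R) : 0 < d -> exists N, (0 < N)%N /\
  forall i, (i < N)%N -> forall s, I01 s -> ball (fr i N) d (lin i N s).
Proof.
move=> d0.
have [N hN] : exists N : nat, d^-1 < N.+1%:R.
  exists (Num.Def.archi_bound d^-1); apply: lt_trans (archi_boundP _) _.
    by rewrite invr_ge0 ltW.
  by rewrite ltr_nat.
exists N.+1; split => // i iN s; rewrite I01E => /andP[s0 s1].
rewrite /ball /= /lin lin_diff //.
have h3 : 0 < N.+1%:R :> R by rewrite ltr0n.
have h5 : 0 < N.+1%:R^-1 :> R by rewrite invr_gt0.
have h6 : N.+1%:R^-1 < d.
  by rewrite -(invrK d) ltf_pV2 ?posrE ?invr_gt0.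
rewrite opprD addrA subrr add0r normrN ger0_norm; last by apply: mulr_ge0 => //; exact: ltW.
apply: le_lt_trans h6; rewrite -[X in _ <= X]mul1r ler_pM2r //.
Qed.

Lemma lin_eq i N s : (0 < N)%N -> lin i N s = (i%:R + s) / N%:R.
Proof.
move=> N0; rewrite /lin lin_diff // /fr.
have h : N%:R != 0 :> R by rewrite pnatr_eq0 -lt0n.
by field.
Qed.

Section Glob.
Variables (X : topologicalType) (G : groupType) (cU : set (set X)) (F : (R -> X) -> G).
Hypothesis oU : forall U, cU U -> open U.
Hypothesis cov : forall x, exists U, cU U /\ U x.
Hypothesis pcF : forall U, cU U -> precoc U F.
Implicit Types (p q : R -> X).

Definition piece p N i := seg p (fr i N) (fr i.+1 N).
Definition valid p N := (0 < N)%N /\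
  forall i, (i < N)%N -> exists U, cU U /\ is_path U (piece p N i).
Definition val p N := prodG (fun i => F (piece p N i)) N.

Lemma pieceE p N i s : piece p N i s = p (lin i N s).
Proof. by []. Qed.

Lemma F_eq_on U a b : cU U -> is_path U a -> (forall s, I01 s -> a s = b s) ->
  F a = F b /\ is_path U b.
Proof. by move=> cUU ap e; apply: u_eq (pcF cUU) ap e. Qed.

Lemma valid_exists p : is_path setT p -> exists N, valid p N.
Proof.
move=> [cp _].
have [d d0 hd] := @lebesgue R^o X I01 p cU (@segment_compact R 0 1) cp oU cov.
have [N [N0 hN]] := grid_ball d0.
exists N; split => // i iN.
have [U [cUU hU]] := hd (fr i N) (fr_I01 N0 (ltnW iN)).
exists U; split => //; apply: is_path_seg' => //.
- exact: fr_ge0.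
- exact: fr_le.
- exact: fr_le1.
- by move=> s Is; apply: hU; [exact: lin_I01 | exact: hN].
Qed.

Lemma piece_piece p N K i k : (0 < N)%N -> (0 < K)%N ->
  seg (piece p N i) (fr k K) (fr k.+1 K) = piece p (N * K) (i * K + k).
Proof.
move=> N0 K0; apply: funext => s; rewrite /seg /piece /seg; congr p.
have hN : N%:R != 0 :> R by rewrite pnatr_eq0 -lt0n.
have hK : K%:R != 0 :> R by rewrite pnatr_eq0 -lt0n.
rewrite /fr -!natr1 !natrD !natrM.
by field; rewrite hN hK.
Qed.

Lemma val_refine p N K : valid p N -> (0 < K)%N -> val p N = val p (N * K).
Proof.
move=> [N0 hv] K0; rewrite /val prodG_mul; apply: prodG_eq => i iN.
have [U [cUU pU]] := hv i iN.
rewrite (u_msplit (pcF cUU) pU K0); apply: prodG_eq => k kK.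
by rewrite piece_piece.
Qed.

Lemma valid_refine p N K : valid p N -> (0 < K)%N -> valid p (N * K).
Proof.
move=> [N0 hv] K0; split; first by rewrite muln_gt0 N0.
move=> j jNK.
have e : j = (j %/ K * K + j %% K)%N by rewrite -divn_eq.
have iN : (j %/ K < N)%N by rewrite ltn_divLR.
have kK : (j %% K < K)%N by rewrite ltn_mod.
have [U [cUU pU]] := hv _ iN.
exists U; split => //; rewrite e -piece_piece //.
apply: is_path_seg => //.
- exact: fr_ge0.
- exact: fr_le.
- exact: fr_le1.
Qed.

Lemma val_unique p N M : valid p N -> valid p M -> val p N = val p M.
Proof.
move=> vN vM; rewrite (val_refine vN (proj1 vM)) (val_refine vM (proj1 vN)).
by rewrite mulnC.
Qed.

Definition Nof p : nat := epsilon (inhabits 1%N) (valid p).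
Definition glob p : G := val p (Nof p).

Lemma glob_val p N : valid p N -> glob p = val p N.
Proof.
move=> vN; rewrite /glob.
have vE : valid p (Nof p) := epsilon_spec (inhabits 1%N) (valid p) (ex_intro _ N vN).
exact: val_unique vE vN.
Qed.

Lemma glob_local U q : cU U -> is_path U q -> glob q = F q.
Proof.
move=> cUU qp.
have e : forall s, I01 s -> q s = piece q 1 0 s.
  by move=> s _; rewrite pieceE lin_eq // divr1 add0r.
have [e1 pp] := F_eq_on cUU qp e.
rewrite (@glob_val q 1); last by split => // i; rewrite ltnS leqn0 => /eqP ->; exists U.
by rewrite /val /= mul1g e1.
Qed.
End Glob.

Section Glob2.
Variables (X : topologicalType) (G : groupType) (cU : set (set X)) (F : (R -> X) -> G).
Hypothesis oU : forall U, cU U -> open U.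
Hypothesis cov : forall x, exists U, cU U /\ U x.
Hypothesis pcF : forall U, cU U -> precoc U F.
Implicit Types (p q : R -> X).
Local Notation piece := (@piece X).
Local Notation valid := (@valid X cU).
Local Notation val := (@val X G F).
Local Notation glob := (@glob X G cU F).

Lemma glob_concat p q : is_path setT p -> is_path setT q -> p 1 = q 0 ->
  glob (pconcat p q) = (glob p * glob q)%g.
Proof.
move=> pp qp e.
have [Np vp] := valid_exists oU cov pp.
have [Nq vq] := valid_exists oU cov qp.
set L := (Np * Nq)%N.
have vpL : valid p L := valid_refine vp (proj1 vq).
have vqL : valid q L by rewrite /L mulnC; exact: valid_refine vq (proj1 vp).
have L0 : (0 < L)%N := proj1 vpL.
have LL0 : (0 < L + L)%N by rewrite addn_gt0 L0.
have hL : 0 < L%:R :> R by rewrite ltr0n.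
have hL1 : L%:R != 0 :> R by rewrite gt_eqF.
have hL2 : L%:R + L%:R != 0 :> R by rewrite gt_eqF // addr_gt0.
have e1 : forall i, (i < L)%N -> forall s, I01 s ->
    piece p L i s = piece (pconcat p q) (L + L) i s.
  move=> i iL s; rewrite I01E => /andP[s0 s1].
  rewrite !pieceE !lin_eq // /pconcat natrD.
  have hi : i%:R + 1 <= L%:R :> R by rewrite natr1 ler_nat.
  have -> : (i%:R + s) / (L%:R + L%:R) <= (1/2 : R).
    by rewrite ler_pdivrMr; lra.
  by congr p; field; rewrite ?hL1 ?hL2.
have e2 : forall i, (i < L)%N -> forall s, I01 s ->
    piece q L i s = piece (pconcat p q) (L + L) (L + i) s.
  move=> i iL s; rewrite I01E => /andP[s0 s1].
  rewrite !pieceE !lin_eq // /pconcat !natrD.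
  have hi0 : 0 <= i%:R :> R by rewrite ler0n.
  case: ifP => h.
    move: h; rewrite ler_pdivrMr; last by lra.
    move=> h; have s00 : s = 0 by lra.
    have i00 : i%:R = 0 :> R by lra.
    by rewrite s00 i00 addr0 mul0r -e; congr p; field; rewrite ?hL1 ?hL2.
  by congr q; field; rewrite ?hL1 ?hL2.
have vc : valid (pconcat p q) (L + L).
  split => // j jL; case: (ltnP j L) => jL'.
    have [U [cUU pU]] := vpL.2 j jL'.
    by exists U; split => //; exact: (F_eq_on pcF cUU pU (e1 j jL')).2.
  have ej : j = (L + (j - L))%N by rewrite subnKC.
  have iL : (j - L < L)%N by rewrite ltn_subLR.
  have [U [cUU pU]] := vqL.2 _ iL.
  by exists U; split => //; rewrite ej; exact: (F_eq_on pcF cUU pU (e2 _ iL)).2.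
rewrite (glob_val pcF vc) (glob_val pcF vpL) (glob_val pcF vqL) /val prodG_add.
congr (_ * _)%g; apply: prodG_eq => i iL.
  have [U [cUU pU]] := vpL.2 i iL.
  by rewrite (F_eq_on pcF cUU pU (e1 i iL)).1.
have [U [cUU pU]] := vqL.2 i iL.
by rewrite (F_eq_on pcF cUU pU (e2 i iL)).1.
Qed.
End Glob2.

Section Glob3.
Variables (X : topologicalType) (G : groupType) (cU : set (set X)) (F : (R -> X) -> G).
Hypothesis oU : forall U, cU U -> open U.
Hypothesis cov : forall x, exists U, cU U /\ U x.
Hypothesis pcF : forall U, cU U -> precoc U F.
Implicit Types (p q : R -> X).
Local Notation piece := (@piece X).
Local Notation valid := (@valid X cU).
Local Notation val := (@val X G F).
Local Notation glob := (@glob X G cU F).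

Lemma val_transfer p p' N : valid p N ->
  (forall i, (i < N)%N -> forall s, I01 s -> piece p N i s = piece p' N i s) ->
  valid p' N /\ val p N = val p' N.
Proof.
move=> [N0 vp] e; split.
  split => // i iN; have [U [cUU pU]] := vp i iN.
  by exists U; split => //; exact: (F_eq_on pcF cUU pU (e i iN)).2.
apply: prodG_eq => i iN; have [U [cUU pU]] := vp i iN.
exact: (F_eq_on pcF cUU pU (e i iN)).1.
Qed.

Definition rowp (H : R * R -> X) (c : R) : R -> X := fun s => H (s, c).
Definition colp (H : R * R -> X) (c : R) : R -> X := fun t => H (c, t).

Lemma c_lin i N : continuous (lin i N).
Proof.
apply: c_add; first exact: c_cst.
by apply: c_mul; [exact: c_id | exact: c_cst].
Qed.

Lemma square U (H : R * R -> X) N i j : cU U -> {within I01 `*` I01, continuous H} ->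
  (i < N)%N -> (j < N)%N ->
  (forall s t, I01 s -> I01 t -> U (H (lin i N s, lin j N t))) ->
  [/\ is_path U (piece (rowp H (fr j N)) N i), is_path U (piece (rowp H (fr j.+1 N)) N i),
      is_path U (piece (colp H (fr i N)) N j), is_path U (piece (colp H (fr i.+1 N)) N j) &
      (F (piece (rowp H (fr j N)) N i) * F (piece (colp H (fr i.+1 N)) N j) =
       F (piece (colp H (fr i N)) N j) * F (piece (rowp H (fr j.+1 N)) N i))%g].
Proof.
move=> cUU cH iN jN hU.
pose H' (z : R * R) := H (lin i N z.1, lin j N z.2).
have cl : continuous (fun z : R * R => (lin i N z.1, lin j N z.2)).
  apply: c_pair.
    by apply: (@c_comp _ _ _ (fun z : R * R => z.1) (lin i N)); [exact: c_fst | exact: c_lin].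
  by apply: (@c_comp _ _ _ (fun z : R * R => z.2) (lin j N)); [exact: c_snd | exact: c_lin].
have cH' : {within I01 `*` I01, continuous H'}.
  apply: (within_comp (continuous_subspaceT cl) cH).
  by case=> s t [/= Is It]; split; apply: lin_I01.
have WH' : forall z, (I01 `*` I01) z -> U (H' z) by case=> s t [/= Is It]; apply: hU.
have pth : forall g : R -> R * R, continuous g -> (forall s, I01 s -> (I01 `*` I01) (g s)) ->
    forall P : R -> X, (forall s, I01 s -> P s = H' (g s)) -> is_path U P.
  move=> g cg Kg P eP; apply: (@is_path_comp X _ (I01 `*` I01) U H' g) => //.
  by move=> s /Kg; apply: WH'.
have I0 := I01_0; have I1 := I01_1.
have pb : is_path U (piece (rowp H (fr j N)) N i).
  apply: (pth (fun s => (s, 0))); first by apply: c_pair; [exact: c_id|exact: c_cst].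
    by move=> s Is; split.
  by move=> s _; rewrite pieceE /rowp /H' /= lin0.
have pt : is_path U (piece (rowp H (fr j.+1 N)) N i).
  apply: (pth (fun s => (s, 1))); first by apply: c_pair; [exact: c_id|exact: c_cst].
    by move=> s Is; split.
  by move=> s _; rewrite pieceE /rowp /H' /= lin1.
have pl : is_path U (piece (colp H (fr i N)) N j).
  apply: (pth (fun s => (0, s))); first by apply: c_pair; [exact: c_cst|exact: c_id].
    by move=> s Is; split.
  by move=> s _; rewrite pieceE /colp /H' /= lin0.
have pr : is_path U (piece (colp H (fr i.+1 N)) N j).
  apply: (pth (fun s => (1, s))); first by apply: c_pair; [exact: c_cst|exact: c_id].
    by move=> s Is; split.
  by move=> s _; rewrite pieceE /colp /H' /= lin1.
split => //.
pose Gm (z : R * R) := ((1 - z.2) * mn z.1 + z.2 * mx z.1, (1 - z.2) * mx z.1 + z.2 * mn z.1).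
have cG : continuous Gm.
  have c1 : continuous (fun z : R * R => 1 - z.2).
    by apply: c_add; [exact: c_cst | apply: c_opp; exact: c_snd].
  have cmn : continuous (fun z : R * R => mn z.1).
    by apply: (@c_comp _ _ _ (fun z : R * R => z.1) mn); [exact: c_fst | exact: c_mn].
  have cmx : continuous (fun z : R * R => mx z.1).
    by apply: (@c_comp _ _ _ (fun z : R * R => z.1) mx); [exact: c_fst | exact: c_mx].
  by apply: c_pair; apply: c_add; apply: c_mul => //; exact: c_snd.
have KG : forall s t, I01 s -> I01 t -> (I01 `*` I01) (Gm (s, t)).
  move=> s t; rewrite !I01E => /andP[s0 s1] /andP[t0 t1].
  have [n0 n1 x0 x1] := mm_bnd (s := s) (introT andP (conj s0 s1)).
  by split; rewrite /= I01E; apply/andP; split; nra.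
have Gend : forall t, I01 t -> Gm (0, t) = Gm (0, 0) /\ Gm (1, t) = Gm (1, 0).
  move=> t _; rewrite /Gm /=.
  have [-> ->] : mn 0 = 2 * 0 /\ mx 0 = 0 by apply: mm_le; lra.
  have [-> ->] : mn 1 = 1 /\ mx 1 = 2 * 1 - 1 by apply: mm_gt; apply/negP; rewrite -ltNge; lra.
  by split; congr (_, _); ring.
have ep : forall s, I01 s -> pconcat (piece (rowp H (fr j N)) N i) (piece (colp H (fr i.+1 N)) N j) s
    = H' (Gm (s, 0)).
  move=> s _; rewrite /pconcat /H' /Gm /= !pieceE /rowp /colp; case: ifP => h.
    have [-> ->] := mm_le h; rewrite subr0 !mul1r !mul0r !addr0 lin0 //.
  have [-> ->] := mm_gt (negP (negbT h)); rewrite subr0 !mul1r !mul0r !addr0 lin1 //.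
have eq : forall s, I01 s -> pconcat (piece (colp H (fr i N)) N j) (piece (rowp H (fr j.+1 N)) N i) s
    = H' (Gm (s, 1)).
  move=> s _; rewrite /pconcat /H' /Gm /= !pieceE /rowp /colp; case: ifP => h.
    have [-> ->] := mm_le h; rewrite subrr !mul1r !mul0r !add0r lin0 //.
  have [-> ->] := mm_gt (negP (negbT h)); rewrite subrr !mul1r !mul0r !add0r lin1 //.
have [pP pQ hom] := @homot_gen X _ (I01 `*` I01) U H' Gm _ _ cH' WH' cG KG Gend ep eq.
rewrite -((pcF cUU).2 _ _ pb pr pP); last by rewrite !pieceE /rowp /colp lin0 lin1.
rewrite -((pcF cUU).2 _ _ pl pt pQ); last by rewrite !pieceE /rowp /colp lin0 lin1.
exact: (pcF cUU).1 _ _ pP pQ hom.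
Qed.
End Glob3.

Section Glob4.
Variables (X : topologicalType) (G : groupType) (cU : set (set X)) (F : (R -> X) -> G).
Hypothesis oU : forall U, cU U -> open U.
Hypothesis cov : forall x, exists U, cU U /\ U x.
Hypothesis pcF : forall U, cU U -> precoc U F.
Implicit Types (p q : R -> X).
Local Notation piece := (@piece X).
Local Notation valid := (@valid X cU).
Local Notation val := (@val X G F).
Local Notation glob := (@glob X G cU F).

Lemma glob_homot p q : is_path setT p -> is_path setT q -> path_homotopic setT p q ->
  glob p = glob q.
Proof.
move=> pp qp [H [cH _ Hends Hsides]].
have cK : compact (I01 `*` I01 : set (R * R)).
  by apply: compact_setX; exact: segment_compact.
have [d d0 hd] := @lebesgue (R^o * R^o)%type X (I01 `*` I01) H cU cK cH oU cov.
have [N [N0 hN]] := grid_ball d0.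
have sq : forall i j, (i < N)%N -> (j < N)%N -> exists U, cU U /\
    forall s t, I01 s -> I01 t -> U (H (lin i N s, lin j N t)).
  move=> i j iN jN.
  have [U [cUU hU]] := hd (fr i N, fr j N) (conj (fr_I01 N0 (ltnW iN)) (fr_I01 N0 (ltnW jN))).
  exists U; split => // s t Is It; apply: hU.
    by split; apply: lin_I01.
  by split; apply: hN.
have rowstep : forall j, (j < N)%N ->
    [/\ valid (rowp H (fr j N)) N, valid (rowp H (fr j.+1 N)) N &
        val (rowp H (fr j N)) N = val (rowp H (fr j.+1 N)) N].
  move=> j jN; split.
  - split => // i iN; have [U [cUU hU]] := sq i j iN jN.
    by have [? ? ? ? ?] := square pcF cUU cH iN jN hU; exists U.
  - split => // i iN; have [U [cUU hU]] := sq i j iN jN.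
    by have [? ? ? ? ?] := square pcF cUU cH iN jN hU; exists U.
  rewrite /val (@prodG_tele _ (fun i => F (piece (rowp H (fr j.+1 N)) N i)) _
     (fun i => F (piece (colp H (fr i N)) N j))); last first.
    move=> i iN; have [U [cUU hU]] := sq i j iN jN.
    have [_ _ _ _ e] := square pcF cUU cH iN jN hU.
    by rewrite -e mulgK.
  have c0 : F (piece (colp H (fr 0 N)) N j) = 1%g.
    have [U [cUU hU]] := sq 0%N j N0 jN.
    have [_ _ pl _ _] := square pcF cUU cH N0 jN hU.
    apply: (u_const (pcF cUU) pl (x := p 0)) => t It.
    by rewrite pieceE /colp fr_0; apply: (Hsides _ (lin_I01 jN It)).1.
  have cN : F (piece (colp H (fr N N)) N j) = 1%g.
    have iN : (N.-1 < N)%N by rewrite prednK.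
    have [U [cUU hU]] := sq N.-1 j iN jN.
    have [_ _ _ pr _] := square pcF cUU cH iN jN hU.
    rewrite prednK // in pr.
    apply: (u_const (pcF cUU) pr (x := p 1)) => t It.
    by rewrite pieceE /colp fr_NN //; apply: (Hsides _ (lin_I01 jN It)).2.
  by rewrite c0 cN invg1 mul1g mulg1.
have ind : forall j, (j <= N)%N -> val (rowp H (fr j N)) N = val (rowp H (fr 0 N)) N.
  elim=> // j IH jN; have [_ _ e] := rowstep j jN; by rewrite -e IH // ltnW.
have [v0 _ _] := rowstep 0%N N0.
have iN : (N.-1 < N)%N by rewrite prednK.
have [_ vN _] := rowstep N.-1 iN; rewrite prednK // in vN.
have [vp ep] : valid p N /\ val (rowp H (fr 0 N)) N = val p N.
  apply: val_transfer => // i iN' s Is; rewrite !pieceE /rowp fr_0.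
  exact: (Hends _ (lin_I01 iN' Is)).1.
have [vq eq] : valid q N /\ val (rowp H (fr N N)) N = val q N.
  apply: val_transfer => // i iN' s Is; rewrite !pieceE /rowp fr_NN //.
  exact: (Hends _ (lin_I01 iN' Is)).2.
by rewrite (glob_val pcF vp) (glob_val pcF vq) -ep -eq ind.
Qed.

Lemma glob_cocycle b : cocycle setT b glob.
Proof.
split.
- move=> p pp cp; have [U [cUU Ub]] := cov b.
  have pU : is_path U p by split; [exact: pp.1 | move=> s /cp ->].
  by rewrite (glob_local pcF cUU pU); apply: (u_const (pcF cUU) pU cp).
- by move=> p q pp qp; apply: glob_homot.
- by move=> p q pp qp e; apply: glob_concat.
Qed.
End Glob4.

Section Coh.
Variables (X : topologicalType) (G : groupType).
Implicit Types (W A : set X) (u v w : (R -> X) -> G).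
Local Open Scope group_scope.

Lemma coh_refl W b u : cohomologous W b u u.
Proof. by exists (fun _ => 1); split => // p _; rewrite mul1g invg1 mulg1. Qed.

Lemma coh_sym W b u v : cohomologous W b u v -> cohomologous W b v u.
Proof.
case=> c [cb e]; exists (fun x => (c x)^-1); split; first by rewrite /cochain0 cb invg1.
by move=> p pp; rewrite e // invgK !mulgA mulVg mul1g mulgVK.
Qed.

Lemma coh_trans W b u v w : cohomologous W b u v -> cohomologous W b v w ->
  cohomologous W b u w.
Proof.
case=> c [cb e] [d [db f]]; exists (fun x => d x * c x); split.
  by rewrite /cochain0 cb db mulg1.
by move=> p pp; rewrite f // e // invgM !mulgA.
Qed.

Lemma coh_sub A W b u v : A `<=` W -> cohomologous W b u v -> cohomologous A b u v.
Proof.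
move=> sA [c [cb e]]; exists c; split => // p pp; apply: e; exact: is_path_sub pp.
Qed.

Lemma cocycle_sub A W b u : A `<=` W -> cocycle W b u -> cocycle A b u.
Proof.
move=> sA [h0 h1 h2]; split.
- by move=> p pp; apply: h0; exact: is_path_sub pp.
- move=> p q pp qp [H [cH WH H0 H1]]; apply: h1; [exact: is_path_sub pp|exact: is_path_sub qp|].
  by exists H; split => // s t Is It; apply: sA; apply: WH.
- by move=> p q pp qp e; apply: h2 => //; apply: is_path_sub sA _.
Qed.

Lemma class_eq W b u v : cohomologous W b u v -> H1class W b u = H1class W b v.
Proof.
move=> e; apply/seteqP; split => w [cw h]; split => //.
  exact: coh_trans (coh_sym e) h.
exact: coh_trans e h.
Qed.

Lemma class_coh W b u v : cocycle W b v -> H1class W b u = H1class W b v ->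
  cohomologous W b u v.
Proof.
move=> cv e; have : H1class W b v v by split => //; exact: coh_refl.
by rewrite -e => -[].
Qed.

Lemma restr_class A W b u : A `<=` W -> cocycle W b u ->
  restr A b (H1class W b u) = H1class A b u.
Proof.
move=> sA cu; apply/seteqP; split => v /=.
  move=> [cv [w [[cw uw] wv]]]; split => //.
  exact: coh_trans (coh_sub sA uw) wv.
move=> [cv uv]; split => //; exists u; split => //; split => //; exact: coh_refl.
Qed.
End Coh.

Lemma path_inter (X : topologicalType) (A B : set X) p :
  is_path A p -> is_path B p -> is_path (A `&` B) p.
Proof. by move=> [cp Ap] [_ Bp]; split => // s Is; split; [exact: Ap|exact: Bp]. Qed.

Lemma path_end0 (X : topologicalType) (A : set X) p : is_path A p -> A (p 0).
Proof. by move=> [_ h]; apply: h; exact: I01_0. Qed.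
Lemma path_end1 (X : topologicalType) (A : set X) p : is_path A p -> A (p 1).
Proof. by move=> [_ h]; apply: h; exact: I01_1. Qed.

Theorem theorem5p1 (X : topologicalType) (b : X) (cU : set (set X))
  (G : groupType) (hU : set X -> set ((Rdefinitions.R -> X) -> G)) :
  (forall U, cU U -> open U) ->
  \bigcup_(U in cU) U = setT ->
  (forall U, cU U -> U b) ->
  (forall U, cU U -> path_connected U) ->
  (forall U V, cU U -> cU V -> path_connected (U `&` V)) ->
  (forall U V W, cU U -> cU V -> cU W -> path_connected (U `&` V `&` W)) ->
  (forall U, cU U -> H1 U b (hU U)) ->
  ((exists h, H1 setT b h /\ forall U, cU U -> restr U b h = hU U) <->
   (forall U V, cU U -> cU V ->
      restr (U `&` V) b (hU U) = restr (U `&` V) b (hU V))) /\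
  (forall h h', H1 setT b h -> H1 setT b h' ->
     (forall U, cU U -> restr U b h = hU U) ->
     (forall U, cU U -> restr U b h' = hU U) -> h = h').
Proof.
move=> oU cover Ub pc1 pc2 pc3 hH1.
have cov : forall x, exists U, cU U /\ U x.
  move=> x; have : [set: X] x by [].
  by rewrite -cover => -[U cUU Ux]; exists U.
have [Vx hVx] := boolp.choice cov.
have subI : forall A B : set X, A `&` B `<=` A by move=> A B y [].
have subI' : forall A B : set X, A `&` B `<=` B by move=> A B y [].
split; first split.
-
  move=> [h [[u [cu ->]] hres]] U V cUU cUV.
  rewrite -(hres U cUU) -(hres V cUV) !restr_class //.
  + exact: cocycle_sub cu.
  + exact: cocycle_sub cu.
-
  move=> compat.
  have exU : forall U, exists u, cU U -> cocycle U b u /\ hU U = H1class U b u.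
    move=> U; case: (pselect (cU U)) => h; last by exists (fun _ => 1%g).
    by have [u [cu e]] := hH1 U h; exists u.
  have [uU huU] := boolp.choice exU.
  have cohUV : forall U V, cU U -> cU V -> cohomologous (U `&` V) b (uU U) (uU V).
    move=> U V cUU cUV; have [cu eu] := huU U cUU; have [cv ev] := huU V cUV.
    apply: class_coh; first exact: cocycle_sub (subI' U V) cv.
    have := compat U V cUU cUV.
    by rewrite eu ev (restr_class (subI U V) cu) (restr_class (subI' U V) cv).
  have exc : forall UV : set X * set X, exists c : X -> G, cU UV.1 -> cU UV.2 ->
      cochain0 b c /\ forall p, is_path (UV.1 `&` UV.2) p ->
        uU UV.2 p = (c (p zeroR) * uU UV.1 p * (c (p oneR))^-1)%g.
    case=> U V; case: (pselect (cU U /\ cU V)) => [[cUU cUV]|nUV]; last first.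
      by exists (fun _ => 1%g) => cUU cUV; exfalso; apply: nUV.
    by have [c hc] := cohUV U V cUU cUV; exists c.
  have [cc hcc] := boolp.choice exc.
  pose ccf U V := cc (U, V).
  have K1 : forall U V x d, cU U -> cU V -> is_path (U `&` V) d -> d 0 = b -> d 1 = x ->
      ccf U V x = ((uU V d)^-1 * uU U d)%g.
    move=> U V x d cUU cUV pd d0 d1.
    have [cb e] := hcc (U, V) cUU cUV.
    have := e d pd; rewrite /zeroR /oneR d0 d1 cb mul1g => ->.
    by rewrite invgM invgK mulgVK.
  have K2 : forall L L' V x, cU L -> cU L' -> cU V -> L x -> L' x -> V x ->
      ccf L V x = (ccf L' V x * ccf L L' x)%g.
    move=> L L' V x cL cL' cV Lx L'x Vx'.
    have [_ hd] := pc3 L L' V cL cL' cV.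
    have [d [pd [d0 d1]]] := hd b x (conj (conj (Ub L cL) (Ub L' cL')) (Ub V cV))
      (conj (conj Lx L'x) Vx').
    have s1 : L `&` L' `&` V `<=` L `&` V by move=> y [[? ?] ?]; split.
    have s2 : L `&` L' `&` V `<=` L' `&` V by move=> y [[? ?] ?]; split.
    have s3 : L `&` L' `&` V `<=` L `&` L' by move=> y [[? ?] ?]; split.
    rewrite (K1 L V x d cL cV (is_path_sub s1 pd) d0 d1).
    rewrite (K1 L' V x d cL' cV (is_path_sub s2 pd) d0 d1).
    rewrite (K1 L L' x d cL cL' (is_path_sub s3 pd) d0 d1).
    by rewrite !mulgA mulgK.
  pose lab q := epsilon (inhabits (setT : set X)) (fun L => cU L /\ is_path L q).
  pose F q := (ccf (lab q) (Vx (q 0%R)) (q 0%R) * uU (lab q) q *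
     (ccf (lab q) (Vx (q 1%R)) (q 1%R))^-1)%g.
  have FE : forall L q, cU L -> is_path L q ->
      F q = (ccf L (Vx (q 0%R)) (q 0%R) * uU L q * (ccf L (Vx (q 1%R)) (q 1%R))^-1)%g.
    move=> L q cL pL.
    have [cL' pL'] : cU (lab q) /\ is_path (lab q) q.
      exact: (epsilon_spec (inhabits (setT : set X)) (fun L => cU L /\ is_path L q) (ex_intro _ L (conj cL pL))).
    rewrite /F; move: (lab q) cL' pL' => L' cL' pL'.
    have [_ e] := hcc (L, L') cL cL'.
    have := e q (path_inter pL pL'); rewrite /zeroR /oneR /= => ->.
    rewrite (K2 L L' (Vx (q 0%R)) (q 0%R)) //; first last.
    - exact: (hVx _).2.
    - exact: path_end0 pL'.
    - exact: path_end0 pL.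
    - exact: (hVx _).1.
    rewrite (K2 L L' (Vx (q 1%R)) (q 1%R)) //; first last.
    - exact: (hVx _).2.
    - exact: path_end1 pL'.
    - exact: path_end1 pL.
    - exact: (hVx _).1.
    by rewrite invgM !mulgA.
  have pc0 : forall p q : Rdefinitions.R -> X, pconcat p q 0 = p 0.
    by move=> p q; rewrite /pconcat mulr0 ifT //; lra.
  have pc1' : forall p q : Rdefinitions.R -> X, pconcat p q 1 = q 1.
    move=> p q; rewrite /pconcat ifF; last by apply/negbTE; rewrite -ltNge; lra.
    by congr q; ring.
  have pcF : forall L, cU L -> precoc L F.
    move=> L cL; have [[_ hhom hcat] _] := huU L cL; split.
    - move=> p q pp qp hom.
      have [H [_ _ H0 H1]] := hom.
      have e0 : p 0 = q 0.
        by rewrite -(H1 1 I01_1).1 (H0 0 I01_0).2.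
      have e1 : p 1 = q 1.
        by rewrite -(H1 1 I01_1).2 (H0 1 I01_1).2.
      by rewrite (FE L p) // (FE L q) // (hhom p q pp qp hom) e0 e1.
    - move=> p q pp qp ppq e.
      rewrite (FE L _ cL ppq) (FE L p) // (FE L q) // (hcat p q pp qp e) pc0 pc1' e.
      by rewrite !mulgA mulgVK.
  pose u := glob cU F.
  have cu : cocycle setT b u := glob_cocycle oU cov pcF b.
  exists (H1class setT b u); split; first by exists u.
  move=> U cUU; rewrite restr_class //; have [cuU eu] := huU U cUU; rewrite eu.
  apply: class_eq; apply: coh_sym.
  exists (fun x => ccf U (Vx x) x); split.
    exact: (hcc (U, Vx b) cUU (hVx b).1).1.
  move=> q qp; rewrite /u (glob_local pcF cUU qp) (FE U q cUU qp) //.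
-
  move=> h h' [u [cu ->]] [u' [cu' ->]] hres hres'.
  have coh : forall U, cU U -> cohomologous U b u u'.
    move=> U cUU; apply: class_coh; first exact: cocycle_sub cu'.
    by rewrite -!(@restr_class _ _ U setT) // hres // hres'.
  have exc : forall U, exists c : X -> G, cU U -> cochain0 b c /\
      forall p, is_path U p -> u' p = (c (p zeroR) * u p * (c (p oneR))^-1)%g.
    move=> U; case: (pselect (cU U)) => hU'; last by exists (fun _ => 1%g).
    by have [c hc] := coh U hU'; exists c.
  have [cc hcc] := boolp.choice exc.
  have K1 : forall U V x, cU U -> cU V -> U x -> V x -> cc U x = cc V x.
    move=> U V x cUU cUV Ux Vx'.
    have [_ hd] := pc2 U V cUU cUV.
    have [d [pd [d0 d1]]] := hd b x (conj (Ub U cUU) (Ub V cUV)) (conj Ux Vx').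
    have eU := (hcc U cUU).2 d (is_path_sub (subI U V) pd).
    have eV := (hcc V cUV).2 d (is_path_sub (subI' U V) pd).
    rewrite /zeroR /oneR d0 d1 (hcc U cUU).1 (hcc V cUV).1 !mul1g in eU eV.
    by apply: invg_inj; apply: (@mulgI _ (u d)); rewrite -eU -eV.
  pose c x := cc (Vx x) x.
  apply: class_eq; exists c; split; first exact: (hcc _ (hVx b).1).1.
  move=> p pp.
  have [N vN] := valid_exists oU cov pp.
  have pcu := cocycle_precoc cu; have pcu' := cocycle_precoc cu'.
  rewrite (u_msplit pcu pp (proj1 vN)) (u_msplit pcu' pp (proj1 vN)).
  rewrite (@prodG_tele _ (fun k => u (seg p (fr k N) (fr k.+1 N))) _ (fun i => c (p (fr i N)))).
    by rewrite fr_0 fr_NN ?(proj1 vN).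
  move=> i iN; have [U [cUU pU]] := (proj2 vN) i iN.
  rewrite ((hcc U cUU).2 _ pU).
  have e0 : piece p N i zeroR = p (fr i N) by rewrite pieceE /zeroR lin0.
  have e1 : piece p N i oneR = p (fr i.+1 N) by rewrite pieceE /oneR lin1.
  have U0 : U (p (fr i N)) by rewrite -e0; exact: path_end0 pU.
  have U1 : U (p (fr i.+1 N)) by rewrite -e1; exact: path_end1 pU.
  rewrite e0 e1.
  rewrite /c (K1 U (Vx (p (fr i N))) _ cUU (hVx _).1 U0 (hVx _).2).
  by rewrite (K1 U (Vx (p (fr i.+1 N))) _ cUU (hVx _).1 U1 (hVx _).2).
Qed.
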